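(* Let $n\ge1$, let $L_1,\dots,L_N$ be complex $n\times n$ matrices, let $\pi_1,\dots,\pi_n$ be mutually orthogonal rank-one orthogonal projectors on $\mathbb{C}^n$, let $w_{jk}:=\sum_{\alpha=1}^N \mathrm{Tr}(\pi_j L_\alpha\pi_k L_\alpha^\dagger)$ for $j\neq k$, and let $\Omega$ be the matrix with $\Omega_{jk}=w_{jk}$ ($j\ne k$) and $\Omega_{kk}=-\sum_{l\ne k}w_{lk}$. Let $N_1,\dots,N_{n_B}$ be the vertex sets of the basins of $G_\Omega$, $N_B=\bigcup_\eta N_\eta$, and let $G'_\Omega$ be the graph obtained from $G_\Omega$ by removing every edge whose two endpoints lie in the same basin. Then the kernel of $\Omega^T$ is spanned by the linearly independent vectors $$\kappa'_\eta := \Big(\sum_{\tau\in T_B(G'_\Omega)} W(\tau)\Big)\sum_{j\in N_\eta} e_j + \sum_{l\notin N_B}\ \sum_{\tau\in T_B(G'_\Omega,\eta,l)} W(\tau)\, e_l,\qquad \eta=1,\dots,n_B.$$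
   Context: $G_\Omega$ is the directed graph on $\{1,\dots,n\}$ with a directed edge from $k$ to $j$ of weight $w_{jk}$ for each $j\ne k$ with $w_{jk}\ne0$. A basin is a strongly connected component with no edge leaving it. $e_j$ is the $j$-th standard basis vector. For a digraph $G$ on $\{1,\dots,n\}$, $T_B(G)$ is the set of spanning forests of $G$ whose set of roots is exactly $N_B$: subgraphs containing all $n$ vertices, with no directed cycles, in which every vertex of $N_B$ has no outgoing edge and every vertex outside $N_B$ has exactly one outgoing edge. $T_B(G,\eta,l)$ is the set of forests in $T_B(G)$ in which vertex $l$ lies in a tree rooted at a vertex of $N_\eta$. $W(\tau)$ is the product of the edge weights of $\tau$, with $W(\tau)=1$ if $\tau$ has no edges. *)

(* Defs.v *)
From mathcomp Require Import all_boot all_algebra.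
From mathcomp Require Import reals.
From mathcomp.real_closed Require Export complex.
Set Implicit Arguments. Unset Strict Implicit. Unset Printing Implicit Defensive.
Import GRing.Theory Num.Theory.
Local Open Scope ring_scope.

Section Defs.
Variable C : numClosedFieldType.

Definition dag m p (M : 'M[C]_(m, p)) : 'M[C]_(p, m) := (map_mx Num.conj M)^T.

Variable n : nat.

Definition wmat (N : nat) (pi : 'I_n -> 'M[C]_n) (L : 'I_N -> 'M[C]_n)
  (j k : 'I_n) : C :=
  \sum_(a < N) \tr (pi j *m L a *m pi k *m dag (L a)).

Definition Omega (w : 'I_n -> 'I_n -> C) : 'M[C]_n :=
  \matrix_(j, k) if j == k then - \sum_(l | l != k) w l k else w j k.

Definition edgeG (w : 'I_n -> 'I_n -> C) : rel 'I_n :=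
  fun k j => (j != k) && (w j k != 0).

(* basin: a (nonempty) strongly connected set with no edge leaving it
   (such a set is automatically a maximal strongly connected component) *)
Definition is_basin (e : rel 'I_n) (S : {set 'I_n}) : bool :=
  [&& S != set0,
      [forall x in S, forall y in S, connect e x y] &
      [forall x in S, forall y, e x y ==> (y \in S)]].

Definition basins (e : rel 'I_n) : {set {set 'I_n}} := [set S | is_basin e S].

Definition NB (e : rel 'I_n) : {set 'I_n} := \bigcup_(S in basins e) S.

Definition edgeG' (w : 'I_n -> 'I_n -> C) : rel 'I_n :=
  fun k j => edgeG w k j &&
    ~~ [exists S in basins (edgeG w), (k \in S) && (j \in S)].

(* subgraphs are edge sets; the pair (k, j) is the edge k -> j *)
Definition frel (F : {set 'I_n * 'I_n}) : rel 'I_n := fun x y => (x, y) \in F.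

Definition outdeg (F : {set 'I_n * 'I_n}) (v : 'I_n) : nat :=
  #|[set p in F | p.1 == v]|.

(* F in T_B(G): F subgraph of G, acyclic, roots exactly the vertices of Nb *)
Definition is_forest (G : rel 'I_n) (Nb : {set 'I_n})
  (F : {set 'I_n * 'I_n}) : bool :=
  [&& [forall p in F, G p.1 p.2],
      [forall v, if v \in Nb then outdeg F v == 0%N else outdeg F v == 1%N] &
      [forall p in F, ~~ connect (frel F) p.2 p.1]].

Definition in_tree_of (F : {set 'I_n * 'I_n}) (Ns : {set 'I_n}) (l : 'I_n) : bool :=
  [exists r in Ns, connect (frel F) l r].

Definition Wt (w : 'I_n -> 'I_n -> C) (F : {set 'I_n * 'I_n}) : C :=
  \prod_(p in F) w p.2 p.1.

Definition evec (j : 'I_n) : 'cV[C]_n := delta_mx j 0.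

Definition kappa' (w : 'I_n -> 'I_n -> C) (S : {set 'I_n}) : 'cV[C]_n :=
  let G' := edgeG' w in
  let Nb := NB (edgeG w) in
  (\sum_(F | is_forest G' Nb F) Wt w F) *: (\sum_(j in S) evec j)
  + \sum_(l | l \notin Nb)
      (\sum_(F | is_forest G' Nb F && in_tree_of F S l) Wt w F) *: evec l.

End Defs.

(* Main.v *)
Require Import Defs.
From mathcomp Require Import all_boot all_algebra.
From mathcomp Require Import reals.
From mathcomp.real_closed Require Import complex.
Set Implicit Arguments. Unset Strict Implicit. Unset Printing Implicit Defensive.
Import GRing.Theory Num.Theory.

Section GraphA.
Variable n : nat.
Implicit Types (e : rel 'I_n) (S A : {set 'I_n}).

Lemma connect_closed e A x y :
  (forall a b, a \in A -> e a b -> b \in A) -> x \in A -> connect e x y -> y \in A.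
Proof.
move=> cl xA /connectP [p pth ->]; elim: p x xA pth => [|a p IH] x xA //=.
by case/andP=> exa pth; apply: IH pth; apply: cl exa.
Qed.

Lemma basin_closed e S a b : is_basin e S -> a \in S -> e a b -> b \in S.
Proof.
by case/and3P=> _ _ /forallP cl aS eab; move: (cl a); rewrite aS /= => /forallP /(_ b); rewrite eab.
Qed.

Lemma basin_conn e S a b : is_basin e S -> a \in S -> b \in S -> connect e a b.
Proof.
by case/and3P=> _ /forallP sc _ aS bS; move: (sc a); rewrite aS /= => /forallP /(_ b); rewrite bS.
Qed.

Lemma basin_eq e S S' x : is_basin e S -> is_basin e S' -> x \in S -> x \in S' -> S = S'.
Proof.
move=> bS bS' xS xS'.
have H: forall U V, is_basin e U -> is_basin e V -> x \in U -> x \in V -> U \subset V.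
  move=> U V bU bV xU xV; apply/subsetP=> y yU.
  apply: (connect_closed (A:=V)) xV (basin_conn bU xU yU).
  by move=> a b; apply: basin_closed.
by apply/eqP; rewrite eqEsubset !H.
Qed.

Lemma exists_basin e x : exists2 S, is_basin e S & exists2 y, y \in S & connect e x y.
Proof.
pose Rs y := [set z | connect e y z].
have Px : connect e x x by exact: connect0.
case: (arg_minnP (fun y => #|Rs y|) Px) => y0 xy0 mn.
have sub: forall z, connect e y0 z -> Rs z \subset Rs y0.
  move=> z yz; apply/subsetP=> u; rewrite !inE => zu; exact: connect_trans yz zu.
have eqR: forall z, connect e y0 z -> Rs z = Rs y0.
  move=> z yz; apply/eqP; rewrite eqEcard sub //=.
  by apply: mn; exact: connect_trans xy0 yz.
exists (Rs y0).
  apply/and3P; split.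
  - by apply/set0Pn; exists y0; rewrite inE connect0.
  - apply/forallP=> a; apply/implyP; rewrite inE => ya; apply/forallP=> b; apply/implyP.
    rewrite inE => yb.
    have : y0 \in Rs a by rewrite (eqR a ya) inE connect0.
    by rewrite inE => ay; exact: connect_trans ay yb.
  - apply/forallP=> a; apply/implyP; rewrite inE => ya; apply/forallP=> b; apply/implyP.
    by move=> eab; rewrite inE (connect_trans ya) // connect1.
by exists y0; rewrite // inE connect0.
Qed.

Lemma connect_det e x y z : (forall a b c, e a b -> e a c -> b = c) ->
  connect e x y -> connect e x z -> connect e y z || connect e z y.
Proof.
move=> fn /connectP [p pth ->]; elim: p x pth => [|a p IH] x /=; first by move=> _ ->.
case/andP=> exa pth xz.
case: (eqVneq z x) => [->|zx].
  by apply/orP; right; apply/connectP; exists (a :: p) => //=; rewrite exa.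
apply: IH pth _.
move/connectP: xz => [[|b q]] /=; first by move=> _ zx'; move: zx; rewrite zx' eqxx.
case/andP=> exb pq ->; rewrite (fn _ _ _ exa exb); apply/connectP; by exists q.
Qed.

Lemma connect_rootE e r y : (forall b, ~~ e r b) -> connect e r y -> y = r.
Proof.
move=> nr /connectP [[|b p] /=]; first by move=> _ ->.
by case/andP=> erb; move: (nr b); rewrite erb.
Qed.

End GraphA.


Section Forests.
Variable n : nat.
Implicit Types (F : {set 'I_n * 'I_n}) (Nb : {set 'I_n}) (G : rel 'I_n).

Lemma outdeg0 F v y : outdeg F v = 0 -> (v, y) \notin F.
Proof.
move/cards0_eq=> H; apply/negP=> vy.
have : (v, y) \in [set p in F | p.1 == v] by rewrite inE vy eqxx.
by rewrite H inE.
Qed.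

Lemma outdeg_le1 F v y z : outdeg F v <= 1 -> (v, y) \in F -> (v, z) \in F -> y = z.
Proof.
move/card_le1_eqP=> H vy vz.
have := H (v, y) (v, z); rewrite !inE vy vz eqxx => /(_ isT isT).
by case.
Qed.

Lemma outdeg1_ex F v : outdeg F v = 1 -> exists y, (v, y) \in F.
Proof.
move/eqP/cards1P=> [[a b] H].
have : (a, b) \in [set p in F | p.1 == v] by rewrite H inE.
by rewrite inE /= => /andP [ab /eqP av]; exists b; rewrite -av.
Qed.

Lemma forestP G Nb F : is_forest G Nb F ->
  [/\ forall p, p \in F -> G p.1 p.2,
      forall v, v \in Nb -> outdeg F v = 0,
      forall v, v \notin Nb -> outdeg F v = 1 &
      forall p, p \in F -> ~~ connect (Defs.frel F) p.2 p.1].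
Proof.
case/and3P=> /forallP H1 /forallP H2 /forallP H3; split.
- by move=> p pF; move: (H1 p); rewrite pF.
- by move=> v vN; move: (H2 v); rewrite vN => /eqP.
- by move=> v vN; move: (H2 v); rewrite (negPf vN) => /eqP.
- by move=> p pF; move: (H3 p); rewrite pF.
Qed.

Lemma forestI G Nb F :
  (forall p, p \in F -> G p.1 p.2) ->
  (forall v, v \in Nb -> outdeg F v = 0) ->
  (forall v, v \notin Nb -> outdeg F v = 1) ->
  (forall p, p \in F -> ~~ connect (Defs.frel F) p.2 p.1) -> is_forest G Nb F.
Proof.
move=> H1 H2 H3 H4; apply/and3P; split.
- by apply/forallP=> p; apply/implyP; apply: H1.
- by apply/forallP=> v; case: ifP=> vN; apply/eqP; [apply: H2|apply: H3; rewrite vN].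
- by apply/forallP=> p; apply/implyP; apply: H4.
Qed.

Lemma forest_le1 G Nb F v : is_forest G Nb F -> outdeg F v <= 1.
Proof.
case/forestP=> _ H2 H3 _; case: (boolP (v \in Nb)) => vN.
  by rewrite H2. by rewrite H3.
Qed.

Lemma forest_fn G Nb F a b c : is_forest G Nb F -> Defs.frel F a b -> Defs.frel F a c -> b = c.
Proof. by move=> fF; apply: outdeg_le1; apply: forest_le1 fF. Qed.

Lemma forest_root G Nb F r y : is_forest G Nb F -> r \in Nb -> connect (Defs.frel F) r y -> y = r.
Proof.
case/forestP=> _ H2 _ _ rN; apply: (@connect_rootE _ (Defs.frel F)) => b.
by rewrite /Defs.frel; apply: outdeg0; apply: H2.
Qed.

Section Add.
Variables (F' : {set 'I_n * 'I_n}) (k m : 'I_n).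
Let Fk := (k, m) |: F'.

Lemma connect_split x y : connect (Defs.frel Fk) x y ->
  connect (Defs.frel F') x y \/ (connect (Defs.frel F') x k /\ connect (Defs.frel Fk) k y).
Proof.
move/connectP=> [p pth ->]; elim: p x pth => [|a p IH] x /=.
  by move=> _; left; exact: connect0.
case/andP=> xa pth.
case: (eqVneq x k) => [xk|xk].
  subst x; right; split; first exact: connect0.
  by apply/connectP; exists (a :: p) => //=; rewrite xa.
have xaF : (x, a) \in F'.
  by move: xa; rewrite /Defs.frel !inE xpair_eqE (negPf xk).
case: (IH a pth) => [H|[H1 H2]].
  by left; apply: connect_trans (connect1 _) H; exact: xaF.
by right; split=> //; apply: connect_trans (connect1 _) H1; exact: xaF.
Qed.

Lemma connect_from_k y : (forall b, (k, b) \notin F') -> ~~ connect (Defs.frel F') m k ->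
  connect (Defs.frel Fk) k y -> y = k \/ connect (Defs.frel F') m y.
Proof.
move=> nk nmk /connectP [[|a p] /=]; first by move=> _ ->; left.
case/andP=> ka pth ->.
have am : a = m.
  by move: ka; rewrite /Defs.frel !inE => /orP [/eqP [->]|kaF] //; move: (nk a); rewrite kaF.
subst a; right.
case: (connect_split (y := last m p) (x := m)).
- by apply/connectP; exists p.
- by [].
- by case=> H; rewrite H in nmk.
Qed.

Lemma connect_subU x y : connect (Defs.frel F') x y -> connect (Defs.frel Fk) x y.
Proof.
apply: connect_sub => a b ab; apply: connect1; move: ab; rewrite /Defs.frel !inE => ->; by rewrite orbT.
Qed.

End Add.

Lemma outdegU1 F k m v : (k, m) \notin F ->
  outdeg ((k, m) |: F) v = outdeg F v + (v == k).
Proof.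
move=> kmF; rewrite /outdeg.
case: (eqVneq v k) => [->|vk].
  rewrite (_ : [set p in (k, m) |: F | p.1 == k] = (k, m) |: [set p in F | p.1 == k]).
    by rewrite cardsU1 inE (negPf kmF) addnC.
  by apply/setP=> p; rewrite !inE; case: (eqVneq p (k, m)) => [->|]; rewrite ?eqxx.
rewrite addn0; apply: eq_card => p; rewrite !inE.
case: (eqVneq p (k, m)) => [->|] /=; last by []. by rewrite [k == v]eq_sym (negPf vk) andbF.
Qed.

Lemma outdegD F k v : outdeg (F :\: [set p | p.1 == k]) v = if v == k then 0 else outdeg F v.
Proof.
rewrite /outdeg; case: (eqVneq v k) => [->|vk].
  apply/eqP; rewrite cards_eq0; apply/eqP/setP=> p; rewrite !inE.
  by case: (p.1 == k); rewrite ?andbF.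
apply: eq_card => p; rewrite !inE.
by case: (eqVneq p.1 v) => [->|]; rewrite ?andbF ?andbT ?(negPf vk).
Qed.

End Forests.


Section Reindex.
Variable n : nat.
Variables (G : rel 'I_n) (Nb : {set 'I_n}) (k : 'I_n).
Hypothesis hk : k \notin Nb.

Definition kset : {set 'I_n * 'I_n} := [set p | p.1 == k].
Definition hF (j : {set 'I_n * 'I_n} * 'I_n) := (k, j.2) |: j.1.
Definition hF' (F : {set 'I_n * 'I_n}) :=
  (F :\: kset, odflt k [pick m | (k, m) \in F]).

Lemma forest_split F : is_forest G Nb F -> hF (hF' F) = F.
Proof.
move=> fF; case/forestP: (fF) => _ _ H3 _.
have [m0 km0] := outdeg1_ex (H3 k hk).
rewrite /hF /hF' /=; case: pickP => [m km|/(_ m0)]; last by rewrite km0.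
apply/setP=> p; rewrite !inE; case: (eqVneq p (k, m)) => [->|pkm] //=.
case: (eqVneq p.1 k) => [pk|_] /=; last by [].
case: p pk pkm => a b /= -> kbm; apply/esym/negbTE/negP => kb.
by move: kbm; rewrite (forest_fn fF kb km) eqxx.
Qed.

Lemma cond_equiv (F' : {set 'I_n * 'I_n}) m :
  (is_forest G Nb (hF (F', m)) && (hF' (hF (F', m)) == (F', m))) =
  [&& is_forest G (k |: Nb) F', G k m & ~~ connect (Defs.frel F') m k].
Proof.
rewrite /hF /=; set Fk := (k, m) |: F'.
have kmFk : (k, m) \in Fk by rewrite !inE eqxx.
apply/idP/idP.
- case/andP=> fFk /eqP [eF' _].
  have nk : forall b, (k, b) \notin F'.
    by move=> b; rewrite -eF' !inE eqxx.
  have kmF' := nk m.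
  case/forestP: (fFk) => H1 H2 H3 H4.
  have sub : forall p, p \in F' -> p \in Fk by move=> p pF; rewrite !inE pF orbT.
  have nmk : ~~ connect (Defs.frel F') m k.
    apply/negP=> /(connect_subU k m) mk; by move: (H4 _ kmFk) => /=; rewrite mk.
  apply/and3P; split; [|exact: (H1 _ kmFk)|exact: nmk].
  apply: forestI.
  + by move=> p pF; apply: H1; apply: sub.
  + move=> v; rewrite !inE; case/orP=> [/eqP ->|vN].
      by apply/eqP; rewrite -leqn0 leqNgt; apply/negP; case/card_gt0P=> [[a b]];
         rewrite !inE /= => /andP [abF /eqP ak]; move: abF; rewrite ak (negPf (nk b)).
    have := outdegU1 v kmF'; rewrite H2 // => /esym /eqP; rewrite addn_eq0 => /andP [/eqP //].
  + move=> v; rewrite !inE negb_or => /andP [vk vN].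
    by have := outdegU1 v kmF'; rewrite H3 // (negPf vk) addn0.
  + move=> p pF; apply/negP=> /(connect_subU k m) c.
    by move: (H4 _ (sub _ pF)); rewrite c.
- case/and3P=> fF' Gkm nmk.
  case/forestP: (fF') => H1 H2 H3 H4.
  have nk : forall b, (k, b) \notin F'.
    by move=> b; apply: outdeg0; apply: H2; rewrite !inE eqxx.
  have kmF' := nk m.
  apply/andP; split.
    apply: forestI.
    + move=> p; rewrite !inE => /orP [/eqP -> //|]; exact: H1.
    + move=> v vN; rewrite outdegU1 // H2 ?inE ?vN ?orbT //.
      case: (eqVneq v k) => [vk|//]; by move: hk; rewrite -vk vN.
    + move=> v vN; rewrite outdegU1 //; case: (eqVneq v k) => [->|vk].
        by rewrite H2 // !inE eqxx.
      by rewrite H3 // !inE negb_or vk vN.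
    + move=> p; rewrite !inE => /orP [/eqP ->|pF] /=.
        apply/negP=> /connect_split [|[]] ; by rewrite (negPf nmk).
      have p1k : p.1 != k.
        by apply/negP=> /eqP pk; move: (nk p.2); rewrite -pk -surjective_pairing pF.
      apply/negP=> /connect_split [c|[c1 c2]]; first by move: (H4 _ pF); rewrite c.
      case: (connect_from_k nk nmk c2) => [/eqP|c3]; first by rewrite (negPf p1k).
      move: nmk; rewrite (connect_trans c3 (connect_trans (connect1 (e := Defs.frel F') (x := p.1) (y := p.2) _) c1)) //.
      by rewrite /Defs.frel -surjective_pairing.
  rewrite /hF' /=; apply/eqP; congr (_, _).
    apply/setP=> p; rewrite !inE; case: (eqVneq p.1 k) => [pk|pk] /=.
      apply/esym/negbTE.
      by case: p pk => a b /= ->; apply: nk.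
    case: (eqVneq p (k, m)) => [pkm|] //=.
    by rewrite pkm eqxx in pk.
  case: pickP => [m' |/(_ m)]; last by rewrite kmFk.
  by rewrite !inE => /orP [/eqP [->]|km'] //; move: (nk m'); rewrite km'.
Qed.

Lemma forest_reindex (T : Type) (idx : T) (op : Monoid.com_law idx)
  (g : {set 'I_n * 'I_n} -> T) :
  \big[op/idx]_(F | is_forest G Nb F) g F =
  \big[op/idx]_(F' | is_forest G (k |: Nb) F')
     \big[op/idx]_(m | G k m && ~~ connect (Defs.frel F') m k) g ((k, m) |: F').
Proof.
rewrite (reindex_onto hF hF' forest_split) pair_big_dep.
apply: eq_big => [[F' m]|[F' m] _] //=.
exact: cond_equiv.
Qed.

End Reindex.


Local Open Scope ring_scope.

Section InTree.
Variable n : nat.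
Variables (G : rel 'I_n) (Nb S : {set 'I_n}) (k m : 'I_n) (F' : {set 'I_n * 'I_n}).
Hypotheses (hk : k \notin Nb) (hS : S \subset Nb)
  (fF' : is_forest G (k |: Nb) F') (nmk : ~~ connect (Defs.frel F') m k).
Let Fk := (k, m) |: F'.

Lemma kS : k \notin S.
Proof. by apply/negP=> kS; move: hk; rewrite (subsetP hS _ kS). Qed.

Lemma nkF' b : (k, b) \notin F'.
Proof. by case/forestP: fF' => _ H2 _ _; apply: outdeg0; apply: H2; rewrite !inE eqxx. Qed.

Lemma in_tree_i x : ~~ connect (Defs.frel F') x k -> in_tree_of Fk S x = in_tree_of F' S x.
Proof.
move=> nxk; apply/existsP/existsP => [[r /andP [rS c]]|[r /andP [rS c]]]; exists r; rewrite rS /=.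
  by case: (connect_split c) => [//|[c1 _]]; rewrite c1 in nxk.
exact: connect_subU.
Qed.

Lemma in_tree_ii x : connect (Defs.frel F') x k -> in_tree_of Fk S x = in_tree_of F' S m.
Proof.
move=> xk; apply/existsP/existsP => [[r /andP [rS c]]|[r /andP [rS c]]]; exists r; rewrite rS /=.
  have rN : r \in Nb by rewrite (subsetP hS).
  have rk : r != k by apply/negP=> /eqP rk; move: kS; rewrite -rk rS.
  case: (connect_split c) => [c1|[_ c2]].
    case/orP: (connect_det (fun a b c => @forest_fn _ _ _ _ a b c fF') xk c1) => c3.
      have := forest_root fF' (r := k) (y := r); rewrite !inE eqxx => /(_ isT c3) /eqP.
      by rewrite (negPf rk).
    have := forest_root fF' (r := r) (y := k); rewrite !inE rN orbT => /(_ isT c3) /eqP.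
    by rewrite eq_sym (negPf rk).
  by case: (connect_from_k nkF' nmk c2) => [/eqP|//]; rewrite (negPf rk).
apply: connect_trans (connect_subU k m xk) _.
apply: connect_trans (connect_subU k m c); apply: connect1.
by rewrite /Defs.frel !inE eqxx.
Qed.

End InTree.

Lemma sum_rmcond (K : nmodType) (I : finType) (P Q : pred I) (f : I -> K) :
  (forall i, Q i -> ~~ P i -> f i = 0) ->
  \sum_(i | P i && Q i) f i = \sum_(i | Q i) f i.
Proof.
move=> H; rewrite [RHS](bigID P) /= [X in _ + X]big1 ?addr0.
  by apply: eq_bigl => i; rewrite andbC.
by move=> i /andP [qi npi]; apply: H.
Qed.



Lemma antisym_sum (K : comRingType) (I : finType) (Q : pred I) (x b : I -> K) :
  \sum_(m | Q m) \sum_(j | Q j) x m * x j * (b j - b m) = 0.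
Proof.
have E : forall m j, x m * x j * (b j - b m) = x m * x j * b j - x j * x m * b m.
  by move=> m j; rewrite mulrBr [x j * x m]mulrC.
under eq_bigr do under eq_bigr do rewrite E.
under eq_bigr do rewrite sumrB.
rewrite sumrB [X in _ - X]exchange_big /=.
by rewrite subrr.
Qed.


Section Harm.
Variable K : numClosedFieldType.
Variable n : nat.
Variable w : 'I_n -> 'I_n -> K.

Definition Tf F := is_forest (edgeG' w) (NB (edgeG w)) F.
Definition ind F S x : K := if in_tree_of F S x then Wt w F else 0.
Definition fS S x := \sum_(F | Tf F) ind F S x.

Lemma basin_sub S : S \in basins (edgeG w) -> S \subset NB (edgeG w).
Proof. by move=> SB; apply: bigcup_sup. Qed.

Lemma G'_trans k m : k \notin NB (edgeG w) -> edgeG' w k m = (m != k) && (w m k != 0).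
Proof.
move=> kN; rewrite /edgeG'.
suff -> : ~~ [exists S in basins (edgeG w), (k \in S) && (m \in S)] by rewrite andbT.
apply/negP=> /existsP [S /andP [SB /andP [kS _]]].
by move: kN; rewrite (subsetP (basin_sub SB) _ kS).
Qed.

Lemma harm_transient k (S : {set 'I_n}) : k \notin NB (edgeG w) -> S \subset NB (edgeG w) ->
  \sum_(j | j != k) w j k * (fS S j - fS S k) = 0.
Proof.
move=> hk hS.
under eq_bigr do rewrite /fS -sumrB mulr_sumr.
rewrite exchange_big /= /Tf.
rewrite (forest_reindex (edgeG' w) hk _ (fun F => \sum_(j | j != k) w j k * (ind F S j - ind F S k))).
apply: big1 => F' fF'.
set c := fun j => connect (Defs.frel F') j k.
pose b x : K := if in_tree_of F' S x then 1 else 0.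
have inner : forall m, ~~ c m ->
   \sum_(j | j != k) w j k * (ind ((k, m) |: F') S j - ind ((k, m) |: F') S k) =
   \sum_(j | ~~ c j) w m k * w j k * (b j - b m) * Wt w F'.
  move=> m nmk.
  have WE : Wt w ((k, m) |: F') = w m k * Wt w F'.
    by rewrite /Wt big_setU1 //= (nkF' fF').
  rewrite (bigID c) /= big1 ?add0r.
    apply: eq_big => [j|j /andP [_ njk]].
      by apply/andP/idP=> [[]//|njk]; split=> //; apply/negP=> /eqP jk; move: njk; rewrite jk /c connect0.
    rewrite /ind (in_tree_i S m njk) (in_tree_ii hk hS fF' nmk (connect0 _ k)) WE /b.
    by case: (in_tree_of F' S j); case: (in_tree_of F' S m); rewrite ?subrr ?mulr0 ?mulr1 ?mul0r ?subr0 ?sub0r ?mulrN ?mulNr ?mulr1 ?mul1r; rewrite ?mulrA //; rewrite [w m k * w j k]mulrC -!mulrA.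
  move=> j /andP [_ cj].
  by rewrite /ind (in_tree_ii hk hS fF' nmk cj) (in_tree_ii hk hS fF' nmk (connect0 _ k)) subrr mulr0.
rewrite (sum_rmcond (P := edgeG' w k) (Q := fun m => ~~ c m)); last first.
  move=> m nmk.
  have mk : m != k by apply/negP=> /eqP mk; move: nmk; rewrite mk /c connect0.
  rewrite (G'_trans _ hk) mk /= negbK => /eqP wmk.
  by rewrite inner // big1 // => j _; rewrite wmk !mul0r.
rewrite (eq_bigr (fun m => \sum_(j | ~~ c j) w m k * w j k * (b j - b m) * Wt w F')); last first.
  by move=> m nmk; rewrite inner.
under eq_bigr do rewrite -mulr_suml.
by rewrite -mulr_suml antisym_sum mul0r.
Qed.

End Harm.


Section Kappa.
Variable K : numClosedFieldType.
Variable n : nat.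
Variable w : 'I_n -> 'I_n -> K.
Local Notation Nb := (NB (edgeG w)).
Definition Zf := \sum_(F | Tf w F) Wt w F.

Lemma evecE (j x : 'I_n) : evec K j x 0 = (x == j)%:R.
Proof. by rewrite /evec mxE eqxx andbT. Qed.

Lemma evec_sum (S : {set 'I_n}) x :
  (\sum_(j in S) evec K j) x 0 = (x \in S)%:R.
Proof.
rewrite summxE; under eq_bigr do rewrite evecE.
case: (boolP (x \in S)) => xS.
  rewrite (bigD1 x) //= eqxx big1 ?addr0 // => j /andP [_ jx].
  by rewrite eq_sym (negPf jx).
by rewrite big1 // => j jS; case: (eqVneq x j) => [xj|//]; rewrite xj jS in xS.
Qed.

Lemma evec_sumc (P : pred 'I_n) (c : 'I_n -> K) x :
  (\sum_(l | P l) c l *: evec K l) x 0 = if P x then c x else 0.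
Proof.
rewrite summxE; under eq_bigr do rewrite mxE evecE.
case: (boolP (P x)) => xS.
  rewrite (bigD1 x) //= eqxx mulr1 big1 ?addr0 // => j /andP [_ jx].
  by rewrite eq_sym (negPf jx) mulr0.
by rewrite big1 // => j jS; case: (eqVneq x j) => [xj|]; [rewrite xj jS in xS | rewrite mulr0].
Qed.

Lemma in_tree_NB F S x : Tf w F -> x \in Nb -> in_tree_of F S x = (x \in S).
Proof.
move=> fF xN; apply/existsP/idP => [[r /andP [rS c]]|xS].
  by rewrite -(forest_root fF xN c).
by exists x; rewrite xS connect0.
Qed.

Lemma fS_NB S x : x \in Nb -> fS w S x = (x \in S)%:R * Zf.
Proof.
move=> xN; rewrite /fS /Zf mulr_sumr; apply: eq_bigr => F fF.
by rewrite /ind in_tree_NB //; case: (x \in S); rewrite ?mul1r ?mul0r.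
Qed.

Lemma kappa'E S x : S \in basins (edgeG w) -> kappa' w S x 0 = fS w S x.
Proof.
move=> SB; have hS := basin_sub SB.
rewrite /kappa' mxE mxE evec_sum evec_sumc.
case: (boolP (x \in Nb)) => xN /=.
  by rewrite fS_NB // addr0 mulrC.
have xS : x \notin S by apply/negP=> xS; move: xN; rewrite (subsetP hS _ xS).
rewrite (negPf xS) mulr0 add0r /fS /ind.
by rewrite big_mkcondr.
Qed.

Lemma basin_of_NB x : x \in Nb -> exists2 S', S' \in basins (edgeG w) & x \in S'.
Proof. by move/bigcupP. Qed.

Lemma harm_fS S k : S \in basins (edgeG w) ->
  \sum_(j | j != k) w j k * (fS w S j - fS w S k) = 0.
Proof.
move=> SB; case: (boolP (k \in Nb)) => kN; last by apply: harm_transient => //; exact: basin_sub.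
have [S' S'B kS'] := basin_of_NB kN.
have bS' : is_basin (edgeG w) S' by move: S'B; rewrite inE.
have bS : is_basin (edgeG w) S by move: SB; rewrite inE.
apply: big1 => j jk.
case: (eqVneq (w j k) 0) => [->|wjk]; first by rewrite mul0r.
have jS' : j \in S' by apply: (basin_closed bS' kS'); rewrite /edgeG jk wjk.
have jN : j \in Nb by apply/bigcupP; exists S'.
rewrite !fS_NB //.
have -> : (j \in S) = (k \in S).
  apply/idP/idP => H.
    by rewrite (basin_eq bS bS' H jS').
  by rewrite (basin_eq bS bS' H kS').
by rewrite subrr mulr0.
Qed.

Lemma OmegaP (v : 'cV[K]_n) :
  ((Omega w)^T *m v = 0) <-> (forall k, \sum_(j | j != k) w j k * (v j 0 - v k 0) = 0).
Proof.
have E : forall k, ((Omega w)^T *m v) k 0 = \sum_(j | j != k) w j k * (v j 0 - v k 0).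
  move=> k; rewrite mxE (bigD1 k) //= !mxE eqxx.
  under [X in _ + X]eq_bigr => j jk do rewrite !mxE (negPf jk).
  rewrite mulNr mulr_suml -sumrN -big_split /=.
  by apply: eq_bigr => j _; rewrite mulrBr addrC.
split=> [H k|H]; first by rewrite -E H mxE.
by apply/colP=> k; rewrite E H mxE.
Qed.

End Kappa.


Section Exist.
Variable K : numClosedFieldType.
Variable n : nat.
Variable w : 'I_n -> 'I_n -> K.
Hypothesis hw : forall j k, 0 <= w j k.
Local Notation Nb := (NB (edgeG w)).
Local Notation e := (edgeG w).

Fixpoint reach (i : nat) : {set 'I_n} :=
  if i is i'.+1 then reach i' :|: [set x | [exists y in reach i', e x y]] else Nb.

Lemma reach_all x : exists i, x \in reach i.
Proof.
have [S SB [y yS /connectP [p pth yl]]] := exists_basin e x.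
have yN : y \in Nb by apply/bigcupP; exists S; rewrite ?inE.
exists (size p); elim: p x pth yl => [|a p IH] x /=; first by move=> _ <-.
case/andP=> xa pth yl; rewrite !inE; apply/orP; right.
by apply/existsP; exists a; rewrite xa (IH _ pth yl).
Qed.

Definition dd x := ex_minn (reach_all x).

Lemma dd0 x : x \in Nb -> dd x = 0%N.
Proof.
move=> xN; rewrite /dd; case: ex_minnP => m _ /(_ 0%N xN); by rewrite leqn0 => /eqP.
Qed.

Lemma dd_step x : x \notin Nb -> exists y, e x y && (dd y < dd x)%N.
Proof.
move=> xN; rewrite {2}/dd; case: ex_minnP => m xm mmin.
case: m xm mmin => [|i] /= xm mmin; first by rewrite xm in xN.
rewrite inE in xm; case/orP: xm => [xi|]; first by have := mmin _ xi; rewrite ltnn.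
rewrite inE => /existsP [y /andP [yi exy]]; exists y; rewrite exy /=.
rewrite ltnS /dd; case: ex_minnP => m' _ /(_ _ yi) //.
Qed.

Definition succ x := odflt x [pick y | e x y && (dd y < dd x)%N].

Lemma succP x : x \notin Nb -> e x (succ x) && (dd (succ x) < dd x)%N.
Proof.
move=> xN; rewrite /succ; case: pickP => [y //|H].
by have [y] := dd_step xN; rewrite H.
Qed.

Definition F0 : {set 'I_n * 'I_n} := [set p | (p.1 \notin Nb) && (p.2 == succ p.1)].

Lemma F0P p : p \in F0 -> e p.1 p.2 && (dd p.2 < dd p.1)%N.
Proof. by rewrite inE => /andP [pN /eqP ->]; apply: succP. Qed.

Lemma F0_dd x y : connect (Defs.frel F0) x y -> (dd y <= dd x)%N.
Proof.
move/connectP=> [p pth ->]; elim: p x pth => [|a p IH] x //= /andP [xa pth].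
have /andP [_ lt] := F0P xa.
exact: leq_trans (IH _ pth) (ltnW lt).
Qed.

Lemma F0_forest : Tf w F0.
Proof.
apply: forestI.
- move=> p pF; have /andP [ep _] := F0P pF.
  by move: pF; rewrite inE => /andP [pN _]; rewrite G'_trans.
- move=> v vN; apply/eqP; rewrite cards_eq0; apply/eqP/setP=> p; rewrite !inE.
  by case: (eqVneq p.1 v) => [->|]; rewrite ?vN ?andbF.
- move=> v vN; apply/eqP/cards1P; exists (v, succ v); apply/setP=> p; rewrite !inE.
  case: p => a b /=; rewrite xpair_eqE.
  by case: (eqVneq a v) => [->|]; rewrite ?vN ?andbT ?andbF //= andbC.
- move=> p pF; apply/negP=> /F0_dd; have /andP [_ lt] := F0P pF.
  by rewrite leqNgt lt.
Qed.

Lemma Zf_gt0 : 0 < Zf w.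
Proof.
rewrite /Zf (bigD1 F0) ?F0_forest //=.
apply: ltr_wpDr.
  by apply: sumr_ge0 => F _; apply: prodr_ge0 => p _.
apply: prodr_gt0 => p pF; have /andP [ep _] := F0P pF.
by move: ep; rewrite /edgeG => /andP [_ wp]; rewrite lt0r wp hw.
Qed.

End Exist.


Import order.Order.TTheory GRing.Theory Num.Theory.

Section Max.
Variables (R : realType) (n : nat) (a : 'I_n -> 'I_n -> R).
Hypothesis ha : forall j k, 0 <= a j k.
Variable e : rel 'I_n.
Hypothesis he : forall k j, e k j -> (j != k) && (a j k != 0).

Definition harmR (u : 'I_n -> R) := forall k, \sum_(j | j != k) a j k * (u j - u k) = 0.

Lemma max_step (u : 'I_n -> R) k j : harmR u -> (forall y, u y <= u k) -> e k j -> u j = u k.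
Proof.
move=> hu umax ekj; have /andP [jk ajk] := he ekj.
have H : \sum_(i | i != k) a i k * (u k - u i) == 0.
  by rewrite -oppr_eq0 -sumrN; apply/eqP; rewrite -[RHS](hu k); apply: eq_bigr => i _; rewrite -mulrN opprB.
have Hge : forall i, i != k -> 0 <= a i k * (u k - u i).
  by move=> i _; apply: mulr_ge0; [exact: ha | rewrite subr_ge0; exact: umax].
have H2 := psumr_eq0P Hge (eqP H) jk.
by move/eqP: H2; rewrite mulf_eq0 (negPf ajk) /= subr_eq0 => /eqP ->.
Qed.

Lemma max_connect (u : 'I_n -> R) x0 y : harmR u -> (forall y, u y <= u x0) ->
  connect e x0 y -> u y = u x0.
Proof.
move=> hu umax /connectP [p pth ->].
suff : forall x, u x = u x0 -> path e x p -> u (last x p) = u x0 by apply.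
elim: p {pth} => [|b p IH] x //= ux /andP [exb pth].
apply: IH pth; rewrite (max_step hu _ exb) // => z; rewrite ux; exact: umax.
Qed.

Lemma max_le0 (u : 'I_n -> R) : harmR u ->
  (forall S, is_basin e S -> exists2 z, z \in S & u z = 0) -> forall y, u y <= 0.
Proof.
move=> hu hz y.
case: (@order.Order.TotalTheory.arg_maxP _ _ _ y predT u isT) => x0 _ umax.
have [S bS [y' y'S c]] := exists_basin e x0.
have [z zS uz] := hz S bS.
have c2 : connect e x0 z := connect_trans c (basin_conn bS y'S zS).
have := max_connect hu (fun y => umax y isT) c2.
rewrite uz => ux0; rewrite ux0; exact: umax.
Qed.

Lemma harmRN (u : 'I_n -> R) : harmR u -> harmR (fun x => - u x).
Proof.
move=> hu k; transitivity (- \sum_(j | j != k) a j k * (u j - u k)); last by rewrite hu oppr0.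
rewrite -sumrN; apply: eq_bigr => j _.
by rewrite -mulrN opprB opprK addrC.
Qed.

Lemma harm_zero (u : 'I_n -> R) : harmR u ->
  (forall S, is_basin e S -> exists2 z, z \in S & u z = 0) -> forall y, u y = 0.
Proof.
move=> hu hz y; apply/eqP; rewrite eq_le max_le0 //=.
rewrite -oppr_le0; apply: (max_le0 (harmRN hu)) => S bS.
by have [z zS uz] := hz S bS; exists z; rewrite // uz oppr0.
Qed.
End Max.


Section Dag.
Variable C : numClosedFieldType.

Lemma dag_mul m p q (A : 'M[C]_(m, p)) (B : 'M[C]_(p, q)) : dag (A *m B) = dag B *m dag A.
Proof. by rewrite /dag map_mxM trmx_mul. Qed.

Lemma tr_dag_ge0 m (B : 'M[C]_m) : 0 <= \tr (B *m dag B).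
Proof.
rewrite /mxtrace; apply: sumr_ge0 => i _; rewrite mxE; apply: sumr_ge0 => j _.
by rewrite !mxE mul_conjC_ge0.
Qed.

Lemma proj_tr_ge0 m (P Q A : 'M[C]_m) : dag P = P -> dag Q = Q -> P *m P = P -> Q *m Q = Q ->
  0 <= \tr (P *m A *m Q *m dag A).
Proof.
move=> dP dQ PP QQ.
have -> : P *m A *m Q *m dag A = P *m (P *m A *m Q *m Q *m dag A).
  by rewrite !mulmxA PP -[P *m A *m Q *m Q](mulmxA _ Q Q) QQ.
rewrite mxtrace_mulC.
have -> : P *m A *m Q *m Q *m dag A *m P = (P *m A *m Q) *m dag (P *m A *m Q).
  by rewrite !dag_mul dP dQ !mulmxA.
exact: tr_dag_ge0.
Qed.

End Dag.

Section Transfer.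
Variables (R : realType) (n : nat).

Lemma ReD (x y : R[i]) : complex.Re (x + y) = complex.Re x + complex.Re y. Proof. by case: x; case: y. Qed.
Lemma ImD (x y : R[i]) : complex.Im (x + y) = complex.Im x + complex.Im y. Proof. by case: x; case: y. Qed.
Lemma ReB (x y : R[i]) : complex.Re (x - y) = complex.Re x - complex.Re y. Proof. by case: x; case: y. Qed.
Lemma ImB (x y : R[i]) : complex.Im (x - y) = complex.Im x - complex.Im y. Proof. by case: x; case: y. Qed.
Lemma ReMr (r : R) (z : R[i]) : complex.Re ((r%:C)%C * z) = r * complex.Re z.
Proof. by case: z => x y /=; rewrite mul0r subr0. Qed.
Lemma ImMr (r : R) (z : R[i]) : complex.Im ((r%:C)%C * z) = r * complex.Im z.
Proof. by case: z => x y /=; rewrite mul0r addr0. Qed.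

Lemma Re_sum (I : finType) (P : pred I) (f : I -> R[i]) :
  complex.Re (\sum_(i | P i) f i) = \sum_(i | P i) complex.Re (f i).
Proof. by apply: (big_morph (@complex.Re R) ReD). Qed.
Lemma Im_sum (I : finType) (P : pred I) (f : I -> R[i]) :
  complex.Im (\sum_(i | P i) f i) = \sum_(i | P i) complex.Im (f i).
Proof. by apply: (big_morph (@complex.Im R) ImD). Qed.

Lemma ge0_realC (z : R[i]) : 0 <= z -> z = ((complex.Re z)%:C)%C.
Proof. by move=> /ger0_Im; case: z => x y /= ->. Qed.

Lemma complex0 (z : R[i]) : complex.Re z = 0 -> complex.Im z = 0 -> z = 0.
Proof. by case: z => x y /= -> ->. Qed.

End Transfer.


Theorem mainTheorem5 (R : realType) (n N : nat)
  (L : 'I_N -> 'M[R[i]]_n) (pi : 'I_n -> 'M[R[i]]_n) :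
  (0 < n)%N ->
  (forall j, pi j *m pi j = pi j) ->
  (forall j, dag (pi j) = pi j) ->
  (forall j, \rank (pi j) = 1%N) ->
  (forall j k, j != k -> pi j *m pi k = 0) ->
  let w := wmat pi L in
  let B := basins (edgeG w) in
  (forall c : {set 'I_n} -> R[i],
      \sum_(S in B) c S *: kappa' w S = 0 -> forall S, S \in B -> c S = 0) /\
  (forall v : 'cV[R[i]]_n,
      (Omega w)^T *m v = 0 <->
      exists c : {set 'I_n} -> R[i], v = \sum_(S in B) c S *: kappa' w S).
Proof.
move=> n0 PP dP _ _ w B.
have hw : forall j k, 0 <= w j k.
  move=> j k; rewrite /w /wmat; apply: sumr_ge0 => a _; exact: proj_tr_ge0.
have Zgt := Zf_gt0 hw.
have Z0 : Zf w != 0 by rewrite lt0r_neq0.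
have bB : forall S, (S \in B) = is_basin (edgeG w) S by move=> S; rewrite inE.
have kapB : forall S S' x, S \in B -> S' \in B -> x \in S' ->
    kappa' w S x 0 = (S == S')%:R * Zf w.
  move=> S S' x SB S'B xS'; rewrite kappa'E // fS_NB; last by apply/bigcupP; exists S'.
  suff -> : (x \in S) = (S == S') by [].
  apply/idP/eqP => [xS|->//].
  by apply: (basin_eq (e := edgeG w) _ _ xS xS'); [move: SB | move: S'B]; rewrite inE.
have sumE : forall c S0 x, S0 \in B -> x \in S0 ->
    (\sum_(S in B) c S *: kappa' w S) x 0 = c S0 * Zf w.
  move=> c S0 x S0B xS0; rewrite summxE (bigD1 S0) //= big1 ?addr0.
    by rewrite mxE (kapB _ S0) // eqxx mul1r.
  by move=> S /andP [SB SS0]; rewrite mxE (kapB _ S0) // (negPf SS0) mul0r mulr0.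
have kapH : forall S, S \in B -> (Omega w)^T *m kappa' w S = 0.
  move=> S SB; apply/OmegaP => k.
  under eq_bigr do rewrite !kappa'E //.
  exact: harm_fS.
split.
  move=> c H S SB; have := SB; rewrite bB => /and3P [/set0Pn [x xS] _ _].
  have := sumE c S x SB xS; rewrite H mxE => /esym /eqP.
  by rewrite mulf_eq0 (negPf Z0) orbF => /eqP.
move=> v; split; last first.
  case=> c ->; rewrite mulmx_sumr big1 // => S SB.
  by rewrite -scalemxAr kapH // scaler0.
move=> Hv.
pose c (S : {set 'I_n}) : R[i] := if [pick x in S] is Some x then v x 0 / Zf w else 0.
exists c.
set u := v - \sum_(S in B) c S *: kappa' w S.
have Hu : (Omega w)^T *m u = 0.
  rewrite mulmxBr Hv mulmx_sumr big1 ?subrr // => S SB.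
  by rewrite -scalemxAr kapH // scaler0.
have hu := (OmegaP w u).1 Hu.
have zeros : forall S, is_basin (edgeG w) S -> exists2 z, z \in S & u z 0 = 0.
  move=> S bS; have SB : S \in B by rewrite bB.
  have /and3P [/set0Pn [x0 x0S] _ _] := bS.
  have : c S = if [pick x in S] is Some x then v x 0 / Zf w else 0 by [].
  case: pickP => [z zS|/(_ x0)]; last by rewrite x0S.
  move=> cS; exists z => //.
  have -> : u z 0 = v z 0 - (\sum_(S in B) c S *: kappa' w S) z 0 by rewrite /u !mxE.
  by rewrite (sumE c S z) // cS mulfVK // subrr.
pose a j k := complex.Re (w j k).
have wE : forall j k, w j k = ((a j k)%:C)%C by move=> j k; apply: ge0_realC.
have ha : forall j k, 0 <= a j k by move=> j k; have := hw j k; rewrite wE ler0c.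
have he : forall k j, edgeG w k j -> (j != k) && (a j k != 0).
  move=> k j /andP [jk]; rewrite jk /=; apply: contra => /eqP a0.
  by rewrite wE a0.
have hRe : harmR a (fun x => complex.Re (u x 0)).
  move=> k; transitivity (complex.Re (\sum_(j | j != k) w j k * (u j 0 - u k 0))); last first.
    by rewrite hu.
  rewrite Re_sum; apply: eq_bigr => j _; rewrite [w j k]wE -ReB; move: (u j 0 - u k 0) => z; case: z => x y /=.
  by rewrite mul0r subr0.
have hIm : harmR a (fun x => complex.Im (u x 0)).
  move=> k; transitivity (complex.Im (\sum_(j | j != k) w j k * (u j 0 - u k 0))); last first.
    by rewrite hu.
  rewrite Im_sum; apply: eq_bigr => j _; rewrite [w j k]wE -ImB; move: (u j 0 - u k 0) => z; case: z => x y /=.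
  by rewrite mul0r addr0.
have u0 : u = 0.
  apply/colP => x; rewrite [RHS]mxE.
  have hr : complex.Re (u x 0) = 0.
    apply: (harm_zero ha he hRe) => S bS.
    by have [z zS uz] := zeros S bS; exists z; rewrite // uz.
  have hi : complex.Im (u x 0) = 0.
    apply: (harm_zero ha he hIm) => S bS.
    by have [z zS uz] := zeros S bS; exists z; rewrite // uz.
  by apply/eqP; rewrite eq_complex hr hi /= !eqxx.
by apply/eqP; rewrite -subr_eq0; apply/eqP.
Qed.
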